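(* Let $X$ be a nonempty set and $d$ a triangular symmetric on $X$ such that $(X,d)$ is 0-complete. Let $T:X\to X$, $G\in\{M_1,M_2\}$, and suppose $d(Tx,Ty)\le\varphi(G(x,y))$ for all $x,y\in X$, for some nearly right admissible asymptotic normal function $\varphi:[0,\infty)\to[0,\infty)$. Then $T$ is a global Picard operator (modulo $d$).
   Context: A symmetric on $X$ is a map $d:X\times X\to[0,\infty)$ with $d(x,y)=d(y,x)$; it is triangular if $d(x,z)\le d(x,y)+d(y,z)$ for all $x,y,z$. A sequence $(x_n)$ $0d$-converges to $x$ if $d(x_n,x)\to0$; it is $0d$-convergent if such $x$ exists; it is $0d$-Cauchy if for every $\varepsilon>0$ there is $j$ with $d(x_m,x_n)<\varepsilon$ whenever $j\le m<n$. $(X,d)$ is 0-complete if every $0d$-Cauchy sequence is $0d$-convergent. A nonempty $Y\subseteq X$ is $d$-singleton if $d(y_1,y_2)=0$ for all $y_1,y_2\in Y$. $\mathrm{Fix}(T;d)=\{z: d(z,Tz)=0\}$. $T$ is a global Picard operator (modulo $d$) if for every $x\in X$ the sequence $(T^nx)$ is $0d$-convergent and every point to which it $0d$-converges lies in $\mathrm{Fix}(T;d)$, and moreover $\mathrm{Fix}(T;d)$ is $d$-singleton. Notation: $M_1(x,y)=d(x,y)$, $H(x,y)=\max\{d(x,Tx),d(y,Ty)\}$, $M_2=\max\{M_1,H\}$. $\varphi$ is normal if $\varphi(0)=0$ and $\varphi(t)<t$ for $t>0$; asymptotic normal if normal and every sequence $(r_n)$ in $[0,\infty)$ with $r_{n+1}\le\varphi(r_n)$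 for all $n$ tends to $0$; nearly right admissible if normal and there is a countable $Q\subseteq(0,\infty)$ with $\max\{\limsup_{t\to s+}\varphi(t),\varphi(s)\}<s$ for all $s\in(0,\infty)\setminus Q$. *)

(* Defs.v *)
From Stdlib Require Import Reals.
Open Scope R_scope.

Section Defs.
Context {X : Type}.

Definition symmetric_fn (d : X -> X -> R) : Prop :=
  (forall x y, 0 <= d x y) /\ (forall x y, d x y = d y x).

Definition triangular (d : X -> X -> R) : Prop :=
  forall x y z, d x z <= d x y + d y z.

Definition zd_converges (d : X -> X -> R) (u : nat -> X) (x : X) : Prop :=
  forall eps, eps > 0 -> exists N, forall n, (n >= N)%nat -> d (u n) x < eps.

Definition zd_convergent (d : X -> X -> R) (u : nat -> X) : Prop :=
  exists x, zd_converges d u x.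

Definition zd_Cauchy (d : X -> X -> R) (u : nat -> X) : Prop :=
  forall eps, eps > 0 -> exists j, forall m n, (j <= m)%nat -> (m < n)%nat ->
    d (u m) (u n) < eps.

Definition zero_complete (d : X -> X -> R) : Prop :=
  forall u, zd_Cauchy d u -> zd_convergent d u.

Definition Fix (T : X -> X) (d : X -> X -> R) (z : X) : Prop := d z (T z) = 0.

Definition d_singleton (d : X -> X -> R) (Y : X -> Prop) : Prop :=
  (exists y, Y y) /\ (forall y1 y2, Y y1 -> Y y2 -> d y1 y2 = 0).

Definition global_Picard (T : X -> X) (d : X -> X -> R) : Prop :=
  (forall x, zd_convergent d (fun n => Nat.iter n T x) /\
     (forall z, zd_converges d (fun n => Nat.iter n T x) z -> Fix T d z)) /\
  d_singleton d (Fix T d).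

Definition M1 (d : X -> X -> R) (x y : X) : R := d x y.
Definition H (T : X -> X) (d : X -> X -> R) (x y : X) : R :=
  Rmax (d x (T x)) (d y (T y)).
Definition M2 (T : X -> X) (d : X -> X -> R) (x y : X) : R :=
  Rmax (M1 d x y) (H T d x y).
End Defs.

(* phi : [0,oo) -> [0,oo), represented as a total function R -> R whose
   values on [0,oo) are nonnegative; only its values on [0,oo) matter. *)
Definition maps_nonneg (phi : R -> R) : Prop :=
  forall t, 0 <= t -> 0 <= phi t.

Definition normal (phi : R -> R) : Prop :=
  phi 0 = 0 /\ (forall t, t > 0 -> phi t < t).

Definition asymptotic_normal (phi : R -> R) : Prop :=
  normal phi /\
  forall r : nat -> R, (forall n, 0 <= r n) -> (forall n, r (S n) <= phi (r n)) ->
    Un_cv r 0.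

(* limsup_{t -> s+} phi t < s, unfolded: some c < s bounds phi on a right
   neighbourhood (s, s+delta). *)
Definition limsup_right_lt (phi : R -> R) (s : R) : Prop :=
  exists c delta, c < s /\ delta > 0 /\
    forall t, s < t < s + delta -> phi t <= c.

(* countable Q <= (0,oo) given as (a superset of it in) the range of q;
   condition required for s > 0 outside Q. *)
Definition nearly_right_admissible (phi : R -> R) : Prop :=
  normal phi /\
  exists Q : R -> Prop, (forall s, Q s -> s > 0) /\
    (exists q : nat -> R, forall s, Q s -> exists n, q n = s) /\
    forall s, s > 0 -> ~ Q s -> limsup_right_lt phi s /\ phi s < s.

(* Main.v *)
Require Import Defs.
From Stdlib Require Import Reals Lra Lia.
Open Scope R_scope.
Fixpoint iv (q:nat->R) (l0 h0:R) (n:nat) : R*R :=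
  match n with
  | O => (l0,h0)
  | S k => let p := iv q l0 h0 k in
     if Rlt_dec (q k) ((fst p + snd p)/2)
     then (snd p - (snd p - fst p)/3, snd p)
     else (fst p, fst p + (snd p - fst p)/3)
  end.

Lemma iv_lt q l0 h0 : l0 < h0 -> forall n, fst (iv q l0 h0 n) < snd (iv q l0 h0 n).
Proof. intros Hl n; induction n; simpl; [lra|].
destruct Rlt_dec; simpl; lra. Qed.

Lemma iv_step q l0 h0 n : l0 < h0 ->
  fst (iv q l0 h0 n) <= fst (iv q l0 h0 (S n)) /\
  snd (iv q l0 h0 (S n)) <= snd (iv q l0 h0 n) /\
  (q n < fst (iv q l0 h0 (S n)) \/ snd (iv q l0 h0 (S n)) < q n).
Proof. intros Hl. pose proof (iv_lt q l0 h0 Hl n) as H.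
cbn [iv]. destruct Rlt_dec; simpl; lra. Qed.

Lemma iv_mono q l0 h0 m k : l0 < h0 ->
  fst (iv q l0 h0 m) <= fst (iv q l0 h0 (k+m)) /\
  snd (iv q l0 h0 (k+m)) <= snd (iv q l0 h0 m).
Proof. intros Hl; induction k; simpl plus; [lra|].
pose proof (iv_step q l0 h0 (k+m) Hl). lra. Qed.

Lemma iv_cross q l0 h0 m n : l0 < h0 -> fst (iv q l0 h0 m) <= snd (iv q l0 h0 n).
Proof. intros Hl. destruct (Nat.le_ge_cases m n).
- replace n with ((n-m)+m)%nat by lia. pose proof (iv_mono q l0 h0 m (n-m) Hl).
  pose proof (iv_lt q l0 h0 Hl ((n-m)+m)). lra.
- replace m with ((m-n)+n)%nat by lia. pose proof (iv_mono q l0 h0 n (m-n) Hl).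
  pose proof (iv_lt q l0 h0 Hl ((m-n)+n)). lra.
Qed.

Lemma avoid_seq (q : nat -> R) (a b : R) : a < b ->
  exists s, a < s < b /\ forall n, q n <> s.
Proof.
intros Hab. set (l0 := a + (b-a)/3). set (h0 := b - (b-a)/3).
assert (Hl : l0 < h0) by (unfold l0, h0; lra).
set (E := fun x => exists n, x = fst (iv q l0 h0 n)).
destruct (completeness E) as [s [Hub Hlub]].
- exists h0. intros x [n ->]. apply (iv_cross q l0 h0 n 0 Hl).
- exists (fst (iv q l0 h0 0)). exists 0%nat. reflexivity.
- assert (Hin : forall n, fst (iv q l0 h0 n) <= s <= snd (iv q l0 h0 n)).
  { intro n. split. apply Hub. exists n; reflexivity.
    apply Hlub. intros x [m ->]. apply iv_cross; exact Hl. }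
  exists s. split.
  + pose proof (Hin 0%nat). simpl in H. unfold l0, h0 in H. lra.
  + intros n Hq. pose proof (Hin (S n)). pose proof (iv_step q l0 h0 n Hl). lra.
Qed.

Lemma phi_le (phi : R -> R) : normal phi -> forall t, 0 <= t -> phi t <= t.
Proof. intros [H0 H1] t Ht. destruct (Req_dec t 0) as [->|]; [lra|].
pose proof (H1 t). lra. Qed.

Theorem theorem4 (X : Type) (x0 : X) (d : X -> X -> R)
  (Hsym : symmetric_fn d) (Htri : triangular d) (Hcomp : zero_complete d)
  (T : X -> X) (useM2 : bool) (phi : R -> R)
  (Hphi0 : maps_nonneg phi)
  (Hnra : nearly_right_admissible phi) (Han : asymptotic_normal phi)
  (Hcontr : forall x y : X,
      d (T x) (T y) <= phi (if useM2 then M2 T d x y else M1 d x y)) :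
  global_Picard T d.
Proof.
destruct Hsym as [Hpos Hsy].
destruct Han as [Hnorm Hasym].
pose proof (phi_le phi Hnorm) as Hple.
destruct Hnorm as [Hphi00 Hphilt].
destruct Hnra as [_ [Q [HQpos [[q Hq] HQ]]]].
assert (Hr : forall x, Un_cv (fun n => d (Nat.iter n T x) (Nat.iter (S n) T x)) 0).
{ intro x. apply Hasym; [intro; apply Hpos|]. intro n.
  pose proof (Hcontr (Nat.iter n T x) (Nat.iter (S n) T x)) as Hc.
  change (T (Nat.iter n T x)) with (Nat.iter (S n) T x) in Hc.
  change (T (Nat.iter (S n) T x)) with (Nat.iter (S (S n)) T x) in Hc.
  destruct useM2; [|exact Hc].
  unfold M2, M1, H in Hc.
  change (T (Nat.iter n T x)) with (Nat.iter (S n) T x) in Hc.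
  change (T (Nat.iter (S n) T x)) with (Nat.iter (S (S n)) T x) in Hc.
  set (a := d (Nat.iter n T x) (Nat.iter (S n) T x)) in *.
  set (b := d (Nat.iter (S n) T x) (Nat.iter (S (S n)) T x)) in *.
  assert (Ha0 : 0 <= a) by apply Hpos.
  destruct (Rle_dec b a).
  - rewrite (Rmax_left a b), Rmax_left in Hc by lra. exact Hc.
  - rewrite (Rmax_right a b), Rmax_right in Hc by lra.
    pose proof (Hphilt b). lra. }
assert (Hrb : forall x gamma, gamma > 0 -> exists N, forall n, (n >= N)%nat ->
   d (Nat.iter n T x) (Nat.iter (S n) T x) < gamma).
{ intros x gamma Hg. destruct (Hr x gamma Hg) as [N HN]. exists N. intros n Hn.
  specialize (HN n Hn). unfold Rdist in HN.
  pose proof (Rle_abs (d (Nat.iter n T x) (Nat.iter (S n) T x) - 0)). lra. }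
assert (Hcau : forall x, zd_Cauchy d (fun n => Nat.iter n T x)).
{ intros x eps0 He0.
  destruct (avoid_seq q 0 (eps0/2)) as [eps [Heps Hnq]]; [lra|].
  assert (HnQ : ~ Q eps). { intro HQe. destruct (Hq eps HQe) as [n Hn]. exact (Hnq n Hn). }
  destruct (HQ eps ltac:(lra) HnQ) as [[c [delta [Hc [Hd Hphic]]]] Hpe].
  assert (Hsmall : forall t, 0 <= t < eps + delta -> phi t < eps).
  { intros t Ht. destruct (Req_dec t 0) as [->|Ht0]; [lra|].
    destruct (Rlt_le_dec t eps). pose proof (Hphilt t). lra.
    destruct (Req_dec t eps) as [->|]; [lra|].
    pose proof (Hphic t). lra. }
  set (gamma := Rmin delta eps).
  assert (Hg : 0 < gamma) by (apply Rmin_pos; lra).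
  assert (Hgd : gamma <= delta) by apply Rmin_l.
  assert (Hge : gamma <= eps) by apply Rmin_r.
  destruct (Hrb x gamma Hg) as [N HN].
  assert (Hcl : forall k m, (m >= N)%nat ->
     d (Nat.iter m T x) (Nat.iter (S (k + m)) T x) < eps + gamma).
  { induction k; intros m Hm.
    - simpl plus. pose proof (HN m Hm). lra.
    - pose proof (Htri (Nat.iter m T x) (Nat.iter (S m) T x) (Nat.iter (S (S k + m)) T x)) as Ht.
      pose proof (Hcontr (Nat.iter m T x) (Nat.iter (S (k + m)) T x)) as Hc2.
      change (T (Nat.iter m T x)) with (Nat.iter (S m) T x) in Hc2.
      change (T (Nat.iter (S (k+m)) T x)) with (Nat.iter (S (S k + m)) T x) in Hc2.
      pose proof (IHk m Hm) as IH.
      pose proof (HN m Hm) as Hm1.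
      assert (Hphi : phi (if useM2 then M2 T d (Nat.iter m T x) (Nat.iter (S (k + m)) T x)
                 else M1 d (Nat.iter m T x) (Nat.iter (S (k + m)) T x)) < eps).
      { apply Hsmall. destruct useM2; unfold M2, M1, H.
        - pose proof (HN (S (k+m)) ltac:(lia)) as Hm2.
          change (T (Nat.iter m T x)) with (Nat.iter (S m) T x).
          change (T (Nat.iter (S (k+m)) T x)) with (Nat.iter (S (S (k + m))) T x).
          split.
          + eapply Rle_trans; [apply Hpos|apply Rmax_l].
          + apply Rmax_lub_lt; [lra|]. apply Rmax_lub_lt; lra.
        - split; [apply Hpos|lra]. }
      lra. }
  exists N. intros m n Hm Hmn.
  replace n with (S ((n - m - 1) + m)) by lia.
  pose proof (Hcl (n - m - 1)%nat m Hm). lra. }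
assert (Hlim : forall x z, zd_converges d (fun n => Nat.iter n T x) z -> Fix T d z).
{ intros x z Hz. unfold Fix. set (D := d z (T z)).
  assert (HD0 : 0 <= D) by apply Hpos.
  destruct (Req_dec D 0) as [|HD]; [assumption|exfalso].
  pose proof (Hphilt D ltac:(lra)) as HpD.
  set (eta := Rmin (D/2) ((D - phi D)/2)).
  assert (Heta : 0 < eta) by (apply Rmin_pos; lra).
  assert (He1 : eta <= D/2) by apply Rmin_l.
  assert (He2 : eta <= (D - phi D)/2) by apply Rmin_r.
  destruct (Hz eta Heta) as [N1 HN1].
  destruct (Hrb x eta Heta) as [N2 HN2].
  set (n := max N1 N2).
  pose proof (HN1 n ltac:(lia)) as A1.
  pose proof (HN1 (S n) ltac:(lia)) as A2.
  pose proof (HN2 n ltac:(lia)) as A3.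
  pose proof (Htri z (Nat.iter (S n) T x) (T z)) as Ht.
  rewrite (Hsy z (Nat.iter (S n) T x)) in Ht.
  pose proof (Hcontr (Nat.iter n T x) z) as Hc.
  change (T (Nat.iter n T x)) with (Nat.iter (S n) T x) in Hc.
  fold D in Ht.
  destruct useM2; unfold M2, M1, H in Hc.
  - change (T (Nat.iter n T x)) with (Nat.iter (S n) T x) in Hc. fold D in Hc.
    assert (Hq1 : 0 <= d (Nat.iter n T x) z) by apply Hpos.
    assert (Hq2 : 0 <= d (Nat.iter n T x) (Nat.iter (S n) T x)) by apply Hpos.
    rewrite (Rmax_right (d (Nat.iter n T x) (Nat.iter (S n) T x)) D), Rmax_right in Hc by lra.
    lra.
  - pose proof (Hple (d (Nat.iter n T x) z) (Hpos _ _)). lra. }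
split.
- intro x. split; [|apply Hlim]. apply Hcomp, Hcau.
- split.
  + destruct (Hcomp _ (Hcau x0)) as [z Hz]. exists z. exact (Hlim x0 z Hz).
  + intros y1 y2 H1 H2. unfold Fix in H1, H2.
    pose proof (Htri y1 (T y1) y2) as Ht1.
    pose proof (Htri (T y1) (T y2) y2) as Ht2.
    rewrite (Hsy (T y2)) in Ht2.
    pose proof (Hcontr y1 y2) as Hc.
    assert (Hy0 : 0 <= d y1 y2) by apply Hpos.
    assert (Hle : d y1 y2 <= phi (d y1 y2)).
    { destruct useM2; unfold M2, M1, H in Hc; [|lra].
      rewrite H1, H2, (Rmax_left 0 0), (Rmax_left (d y1 y2) 0) in Hc by lra. lra. }
    destruct (Req_dec (d y1 y2) 0) as [|Hn]; [assumption|].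
    pose proof (Hphilt (d y1 y2)). lra.
Qed.
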